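(* Assume $K_1\subseteq K_2\subseteq\cdots\subseteq K_n\subseteq\mathbb F_q$ are subfields, $d_i=|K_i|$. Let $f\in\mathbb F_q[X_1,\dots,X_n]$ have degree $d=\sum_{i=1}^k(d_i-1)+\ell$ with $0\le k<n$ and $0<\ell\le d_{k+1}-1$, and suppose no monomial occurring in $f$ is divisible by $X_i^{d_i}$ for any $i\in\{1,\dots,n\}$. If the Hamming weight of $\Psi(f)$ equals $(d_{k+1}-\ell)\prod_{i=k+2}^n d_i$, then there exist $j\in\{1,\dots,k+1\}$ with $d_j\ge d_{k+1}-\ell$ and distinct indices $t_1,\dots,t_{k+1}\in\{1,\dots,n\}$ with $K_{t_i}=K_i$ for all $i\in\{1,\dots,k+1\}$, such that the monomial $$X_{t_j}^{\,d_j-(d_{k+1}-\ell)}\prod_{\substack{i=1\\ i\ne j}}^{k+1}X_{t_i}^{\,d_i-1}$$ occurs in $f$ with nonzero coefficient.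
   Context: $\mathcal X=K_1\times\cdots\times K_n=\{\boldsymbol\alpha_1,\dots,\boldsymbol\alpha_m\}$ (fixed enumeration), $m=\prod d_i$, and $\Psi:\mathbb F_q[X_1,\dots,X_n]\to\mathbb F_q^m$, $f\mapsto(f(\boldsymbol\alpha_1),\dots,f(\boldsymbol\alpha_m))$. Empty products equal $1$. *)

(* Defs.v *)
From HB Require Import structures.
From mathcomp Require Import all_boot all_algebra.
From mathcomp Require Import mpoly.
Set Implicit Arguments. Unset Strict Implicit. Unset Printing Implicit Defensive.
Import GRing.Theory.
Local Open Scope ring_scope.

Definition is_subfield (F : fieldType) (S : {pred F}) : Prop :=
  [/\ 1 \in S,
      forall x y, x \in S -> y \in S -> x - y \in S,
      forall x y, x \in S -> y \in S -> x * y \in S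
    & forall x, x \in S -> x^-1 \in S].

Definition grid (F : finFieldType) (n : nat) (K : 'I_n -> {set F})
  : {set {ffun 'I_n -> F}} :=
  [set a : {ffun 'I_n -> F} | [forall i, a i \in K i]].

Definition Psi (F : finFieldType) (n : nat) (K : 'I_n -> {set F})
  (f : {mpoly F[n]}) : seq F :=
  [seq f.@[fun i => a i] | a : {ffun 'I_n -> F} <- enum (grid K)].

Definition hweight (F : finFieldType) (w : seq F) : nat :=
  count (fun x => x != 0) w.

(* Main.v *)
Require Import Defs.
From HB Require Import structures.
From mathcomp Require Import all_boot all_algebra.
From mathcomp Require Import mpoly.
From mathcomp Require Import zify.


Definition shape n (s a : nat -> nat) k l := exists j (t : nat -> nat),
  [/\ j <= k /\ s k - l <= s j,
   forall i, i <= k -> t i < n /\ s (t i) = s i,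
   forall i i', i <= k -> i' <= k -> t i = t i' -> i = i',
   forall i, i <= k -> a (t i) = (if i == j then s i - (s k - l) else s i - 1)
 & forall x, x < n -> (forall i, i <= k -> t i != x) -> a x = 0].

Lemma prod_pos n (F : nat -> nat) : (forall i, i < n -> 0 < F i) -> forall m, 0 < \prod_(m <= i < n) F i.
Proof.
move=> H m; rewrite big_nat_cond; apply: prodn_cond_gt0.
by move=> i /andP[/andP[_ ?] _]; apply: H.
Qed.

Lemma lemB n : forall (s a : nat -> nat) k l,
  (forall i j, i <= j < n -> s i <= s j) ->
  (forall i, i < n -> a i < s i) ->
  k < n -> 0 < l -> l < s k ->
  \sum_(0 <= i < n) a i = \sum_(0 <= i < k) (s i - 1) + l ->
  (s k - l) * \prod_(k.+1 <= i < n) s i <= \prod_(0 <= i < n) (s i - a i) /\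
  (\prod_(0 <= i < n) (s i - a i) <= (s k - l) * \prod_(k.+1 <= i < n) s i ->
     shape n s a k l).
Proof.
elim: n => [|n IH] s a k l Hs Ha Hk Hl0 Hl1 Hsum //.
set s' := fun i => s i.+1. set a' := fun i => a i.+1.
have Hs' : forall i j, i <= j < n -> s' i <= s' j.
  by move=> i j /andP[? ?]; apply: Hs; lia.
have Ha' : forall i, i < n -> a' i < s' i by move=> i ?; apply: Ha.
have Hpos : forall i, i < n -> 0 < s' i by move=> i /Ha'; lia.
have EP : \prod_(0 <= i < n.+1) (s i - a i) = (s 0 - a 0) * \prod_(0 <= i < n) (s' i - a' i).
  by rewrite big_nat_recl.
have ES : \sum_(0 <= i < n.+1) a i = a 0 + \sum_(0 <= i < n) a' i.
  by rewrite big_nat_recl.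
have Rle : \sum_(0 <= i < n) a' i <= \sum_(0 <= i < n) (s' i - 1).
  rewrite big_nat_cond [X in _ <= X]big_nat_cond; apply: leq_sum => i /andP[/andP[_ /Ha' ?] _]; lia.
have Ha0 := Ha 0 (ltn0Sn n).
have sum_ge : forall (F : nat -> nat) m i, i < m -> F i <= \sum_(0 <= j < m) F j.
  move=> F m i Hi; rewrite big_mkord (bigD1 (Ordinal Hi)) //=; exact: leq_addr.
rewrite EP; rewrite ES in Hsum.
case: k Hk Hl1 Hsum => [|k'] Hk Hl1 Hsum.
- rewrite (big_geq (leqnn 0)) add0n in Hsum.
  rewrite big_add1 /=.
  have [Hal|Hal] := eqVneq (a 0) l.
  + have Z : forall i, i < n -> a' i = 0.
      move=> i Hi; have := sum_ge a' n i Hi; lia.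
    have -> : \prod_(0 <= i < n) (s' i - a' i) = \prod_(0 <= i < n) s' i.
      by apply: eq_big_nat => i /andP[_ Hi]; rewrite Z // subn0.
    rewrite Hal; split => // _.
    exists 0, (fun _ => 0); split => //; first by rewrite leq_subr.
    * by move=> i; rewrite leqn0 => /eqP ->.
    * by move=> i i'; rewrite !leqn0 => /eqP -> /eqP ->.
    * by move=> i; rewrite leqn0 => /eqP -> /=; lia.
    * move=> [|y] Hy Ht; first by have := Ht 0 (leqnn 0).
      by apply: Z.
  + have Hal' : a 0 < l by lia.
    destruct n as [|n'].
      by rewrite big_geq // in Hsum; lia.
    have Hs01 : s 0 <= s 1 by apply: Hs.
    have [IH1 IH2] := IH s' a' 0 (l - a 0) Hs' Ha' (ltn0Sn _) ltac:(lia) ltac:(rewrite /s'; lia)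
      ltac:(rewrite (big_geq (leqnn 0)) add0n; lia).
    set Q := \prod_(1 <= i < n'.+1) s' i in IH1 IH2 *.
    set P' := \prod_(0 <= i < n'.+1) (s' i - a' i) in IH1 IH2 *.
    have EW : \prod_(0 <= i < n'.+1) s i.+1 = s 1 * Q by rewrite big_ltn.
    rewrite EW.
    have Qpos : 0 < Q by apply: prod_pos.
    rewrite /s' /= in IH1 IH2.
    have num1 : (s 0 - l) * s 1 <= (s 0 - a 0) * (s 1 - (l - a 0)) by nia.
    split.
      rewrite mulnA; apply: leq_trans (leq_mul num1 (leqnn Q)) _.
      rewrite -mulnA; exact: leq_mul.
    move=> Hle.
    have H3 : (s 0 - a 0) * ((s 1 - (l - a 0)) * Q) <= (s 0 - l) * (s 1 * Q).
      exact: leq_trans (leq_mul (leqnn _) IH1) Hle.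
    rewrite !mulnA leq_pmul2r // in H3.
    have E1 : a 0 = 0 /\ s 1 = s 0 by nia.
    case: E1 => E1 E2.
    have Hle' : P' <= (s 1 - (l - a 0)) * Q.
      rewrite E1 subn0 in Hle *. rewrite E2 mulnA in Hle.
      by rewrite E2 -(leq_pmul2l (_ : 0 < s 0)) ?mulnA //; lia.
    have [j' [t' [[Hj1 Hj2] Ht1 Ht2 Ht3 Ht4]]] := IH2 Hle'.
    exists 0, (fun i => (t' i).+1); split.
    * by rewrite leq_subr.
    * move=> i Hi; have [Hx1 Hx2] := Ht1 i Hi; split => //.
      move: Hi; rewrite leqn0 => /eqP Ei; subst i; move: Hx2; rewrite /= => ->; by rewrite E2.
    * by move=> i i'; rewrite !leqn0 => /eqP -> /eqP ->.
    * move=> i Hi; move: (Hi); rewrite leqn0 => /eqP Ei; subst i.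
      have := Ht3 0 (leqnn 0); rewrite /a' => ->; move: Hj1; rewrite leqn0 => /eqP ->; rewrite /= E1 E2 subn0; lia.
    * move=> [|y] Hy Ht; first by [].
      apply: Ht4 => // i Hi; have := Ht i Hi; by rewrite eqSS.
- have Hk' : k' < n by lia.
  set R := \sum_(0 <= i < n) a' i in Hsum Rle *.
  set P' := \prod_(0 <= i < n) (s' i - a' i) in IH *.
  set g := s 0 - 1 - a 0.
  have Es0 : s 0 - a 0 = g.+1 by rewrite /g; lia.
  rewrite Es0.
  have Hsum2 : a 0 + R = (s 0 - 1) + \sum_(0 <= i < k') (s' i - 1) + l.
    by rewrite Hsum big_nat_recl.
  set T := \sum_(0 <= i < k') (s' i - 1) in Hsum2.
  have HR : R = T + (l + g) by rewrite /g; lia.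
  change (s k'.+1) with (s' k') in Hl1 |- *.
  have Hsk : s 0 <= s' k' by apply: Hs; lia.
  case: (ltnP (l + g) (s' k')) => HlA.
  + have [IH1 IH2] := IH s' a' k' (l + g) Hs' Ha' Hk' ltac:(lia) HlA HR.
    set Q := \prod_(k'.+1 <= i < n) s' i in IH1 IH2.
    have EW : \prod_(k'.+2 <= i < n.+1) s i = Q by rewrite big_add1.
    rewrite EW.
    have Qpos : 0 < Q by apply: prod_pos.
    have num1 : s' k' - l <= g.+1 * (s' k' - (l + g)) by nia.
    split.
      apply: leq_trans (leq_mul num1 (leqnn Q)) _.
      rewrite -mulnA; exact: leq_mul.
    move=> Hle.
    have H3 : g.+1 * ((s' k' - (l + g)) * Q) <= (s' k' - l) * Q.
      exact: leq_trans (leq_mul (leqnn _) IH1) Hle.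
    rewrite !mulnA leq_pmul2r // in H3.
    have E : g = 0 \/ l + g = s' k' - 1 by nia.
    have Hle' : P' <= (s' k' - (l + g)) * Q.
      rewrite -(leq_pmul2l (ltn0Sn g)) mulnA; apply: leq_trans Hle _.
      rewrite leq_mul2r; apply/orP; right; nia.
    have [j' [t' [[Hj1 Hj2] Ht1 Ht2 Ht3 Ht4]]] := IH2 Hle'.
    set t := fun i => if i is i'.+1 then (t' i').+1 else 0.
    have T1 : forall i, i <= k'.+1 -> t i < n.+1 /\ s (t i) = s i.
      move=> [|i] Hi //=; by have [? ?] := Ht1 i Hi.
    have T2 : forall i i', i <= k'.+1 -> i' <= k'.+1 -> t i = t i' -> i = i'.
      move=> [|i] [|i'] //= Hi Hi' [] /Ht2; by move=> ->.
    have T4 : forall x, x < n.+1 -> (forall i, i <= k'.+1 -> t i != x) -> a x = 0.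
      move=> [|y] Hy Ht; first by have := Ht 0 isT.
      apply: Ht4 => // i Hi; by have := Ht i.+1 Hi.
    case: E => E.
    * exists j'.+1, t; split => //.
        split => //. move: Hj2; rewrite E addn0 => //.
      move=> [|i] Hi /=.
        rewrite /g in E; lia.
      have := Ht3 i Hi; rewrite /a' => ->; rewrite eqSS E addn0 //.
    * exists 0, t; split => //.
        split => //; change (s k'.+1) with (s' k'); rewrite /g in E; lia.
      move=> [|i] Hi /=.
        try change (s k'.+1) with (s' k'); rewrite /g in E; lia.
      have := Ht3 i Hi; rewrite /a' => ->; case: ifP => _ //; change (s i.+1) with (s' i); lia.
  + have Hk2 : k'.+1 < n.
      rewrite ltnNge; apply/negP => Hn.
      have En : n = k'.+1 by lia.
      move: Rle; rewrite En big_nat_recr //= -/T => Rle.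
      have := Hpos k' Hk'; lia.
    have HS : s 0 <= s' k'.+1 by apply: Hs; lia.
    set l' := l + g - (s' k').-1.
    have [IH1 IH2] := IH s' a' k'.+1 l' Hs' Ha' Hk2 ltac:(rewrite /l'; lia) ltac:(rewrite /l' /g; lia)
      ltac:(rewrite -/R big_nat_recr //= -/T HR /l'; have := Hpos k' Hk'; lia).
    set Q2 := \prod_(k'.+2 <= i < n) s' i in IH1 IH2.
    set S := s' k'.+1 in IH1 IH2 HS.
    have EW : \prod_(k'.+2 <= i < n.+1) s i = S * Q2 by rewrite big_add1 /= big_ltn.
    rewrite EW.
    have Qpos : 0 < Q2 by apply: prod_pos.
    have gS : g.+1 <= S by rewrite /g; lia.
    have num1 : (s' k' - l) * S <= g.+1 * (S - l') by rewrite /l'; nia.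
    split.
      rewrite mulnA; apply: leq_trans (leq_mul num1 (leqnn Q2)) _.
      rewrite -mulnA; exact: leq_mul.
    move=> Hle.
    have H3 : g.+1 * ((S - l') * Q2) <= (s' k' - l) * (S * Q2).
      exact: leq_trans (leq_mul (leqnn _) IH1) Hle.
    rewrite !mulnA leq_pmul2r // in H3.
    have E : g.+1 = S by rewrite /l' in H3; nia.
    have Ea0 : a 0 = 0 by rewrite /g in E; lia.
    have Es0S : s 0 = S by rewrite /g in E; lia.
    have Hall : forall i, i <= k'.+2 -> s i = s 0.
      move=> i Hi; apply/eqP; rewrite eqn_leq; apply/andP; split.
        by rewrite Es0S; apply: (Hs i k'.+2); lia.
      by apply: (Hs 0 i); lia.
    have Esk : s' k' = s 0 by apply: Hall.
    have El' : l' = l by rewrite /l' /g; lia.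
    have Hle' : P' <= (S - l') * Q2.
      rewrite -(leq_pmul2l (ltn0Sn g)) mulnA; apply: leq_trans Hle _.
      rewrite -E El' Esk mulnA leq_mul2r; apply/orP; right; rewrite Es0S -E; nia.
    have [j' [t' [[Hj1 Hj2] Ht1 Ht2 Ht3 Ht4]]] := IH2 Hle'.
    exists j', (fun i => (t' i).+1); split.
    * split => //.
      change (s k'.+1) with (s' k'); rewrite Esk Hall; last by lia.
      exact: leq_subr.
    * move=> i Hi; have [Hx1 Hx2] := Ht1 i Hi; split => //.
      rewrite /= (Hall i); last by lia.
      change (s (t' i).+1) with (s' (t' i)); rewrite Hx2 /s' (Hall i.+1) //; lia.
    * by move=> i i' Hi Hi' [] /Ht2 ->.
    * move=> i Hi; have := Ht3 i Hi; rewrite /a' => ->.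
      change (s k'.+1) with (s' k').
      rewrite -/S -Es0S El' Esk /s' !Hall //; lia.
    * move=> [|y] Hy Ht //.
      apply: Ht4 => // i Hi; have := Ht i Hi; by rewrite eqSS.
Qed.

Set Implicit Arguments. Unset Strict Implicit. Unset Printing Implicit Defensive.
Import GRing.Theory.
Local Open Scope ring_scope.

Lemma sf0 (F : fieldType) (S : {pred F}) : is_subfield S -> 0 \in S.
Proof. by case=> H1 HB _ _; rewrite -(subrr 1); apply: HB. Qed.

Lemma sf_card2 (F : finFieldType) (S : {set F}) : is_subfield S -> (1 < #|S|)%N.
Proof.
move=> HS; have H0 := sf0 HS; case: HS => H1 _ _ _.
rewrite (cardsD1 0) H0 (cardsD1 1) !inE oner_eq0 H1 /=; lia.
Qed.

Lemma sf_pow1 (F : finFieldType) (S : {set F}) x : is_subfield S -> x \in S -> x != 0 ->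
  x ^+ (#|S|.-1) = 1.
Proof.
move=> HS xS x0; have H0 := sf0 HS; case: HS => H1 HB HM HI.
set S' := S :\ 0.
have EC : #|S'| = #|S|.-1 by rewrite [#|S|](cardsD1 0) H0.
have inj : injective (fun y : F => x * y) by apply: mulfI.
have Eim : [set x * y | y in S'] = S'.
  apply/eqP; rewrite eqEcard card_imset // leqnn andbT.
  apply/subsetP => z /imsetP[y]; rewrite !inE => /andP[y0 yS] ->.
  by rewrite mulf_neq0 // HM.
have : \prod_(y in S') (x * y) = \prod_(y in S') y.
  by rewrite -[in RHS]Eim big_imset //= => y z _ _; apply: inj.
rewrite big_split /= prodr_const EC => E.
have P0 : \prod_(y in S') y != 0.
  by apply/prodf_neq0 => y; rewrite !inE => /andP[].
by apply: (mulIf P0); rewrite mul1r.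
Qed.

Definition rme (d e : nat) : nat := if (e < d)%N then e else ((e.-1 %% d.-1).+1)%N.

Lemma rme_id d e : (e < d)%N -> rme d e = e.
Proof. by rewrite /rme => ->. Qed.

Lemma rme_lt d e : (1 < d)%N -> (rme d e < d)%N.
Proof.
rewrite /rme => Hd; case: ifP => // _.
have : (e.-1 %% d.-1 < d.-1)%N by rewrite ltn_mod; lia.
lia.
Qed.

Lemma rme_ltn d e : (1 < d)%N -> (d <= e)%N -> (rme d e < e)%N.
Proof. move=> Hd Hde; have := rme_lt e Hd; lia. Qed.

Lemma rme_le d e : (1 < d)%N -> (rme d e <= e)%N.
Proof. move=> Hd; case: (ltnP e d) => H; [by rewrite rme_id | exact/ltnW/rme_ltn]. Qed.

Lemma sf_rme (F : finFieldType) (S : {set F}) x e : is_subfield S -> x \in S ->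
  x ^+ e = x ^+ (rme #|S| e).
Proof.
move=> HS xS; have H2 := sf_card2 HS; rewrite /rme; case: ifP => // /negbT; rewrite -leqNgt => Hde.
have [->|x0] := eqVneq x 0; first by rewrite !expr0n; case: e Hde => //; lia.
have He : e = ((e.-1 %/ #|S|.-1) * #|S|.-1 + e.-1 %% #|S|.-1).+1%N.
  by rewrite -divn_eq; lia.
by rewrite {1}He exprS exprD mulnC exprM sf_pow1 // expr1n mul1r -exprS.
Qed.

Definition Box n N (e : 'I_n -> nat) : {set {ffun 'I_n -> 'I_N.+1}} :=
  [set b : {ffun 'I_n -> 'I_N.+1} | [forall i, (b i < e i)%N]].
Definition mnm n N (b : {ffun 'I_n -> 'I_N.+1}) : 'X_{1..n} := [multinom (b i : nat) | i < n].
Definition ofm n N (m : 'X_{1..n}) : {ffun 'I_n -> 'I_N.+1} := [ffun i => inord (m i)].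

Lemma ofm_val n N (m : 'X_{1..n}) i : (m i <= N)%N -> ((ofm N m) i : nat) = m i.
Proof. by move=> H; rewrite ffunE inordK. Qed.

Lemma mnmK n N (m : 'X_{1..n}) : (forall i, m i <= N)%N -> mnm (ofm N m) = m.
Proof. by move=> H; apply/mnmP => i; rewrite mnmE ofm_val. Qed.

Lemma ofmK n N (b : {ffun 'I_n -> 'I_N.+1}) : ofm N (mnm b) = b.
Proof. by apply/ffunP => i; rewrite ffunE mnmE inord_val. Qed.

Lemma in_Box n N (e : 'I_n -> nat) b : (b \in Box N e) = [forall i, (b i < e i)%N].
Proof. by rewrite inE. Qed.

Definition rmM (F : finFieldType) n (K : 'I_n -> {set F}) (m : 'X_{1..n}) : 'X_{1..n} :=
  [multinom rme #|K i| (m i) | i < n].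

Definition evB (F : finFieldType) n N (e : 'I_n -> nat) (x : {ffun 'I_n -> F})
  (c : {ffun {ffun 'I_n -> 'I_N.+1} -> F}) : F :=
  \sum_(b in Box N e) c b * \prod_(i < n) x i ^+ b i.

Definition redc (F : finFieldType) n (K : 'I_n -> {set F}) N (q : {mpoly F[n]}) :
  {ffun {ffun 'I_n -> 'I_N.+1} -> F} :=
  [ffun b => if b \in Box N (fun i => #|K i|) then
      \sum_(m <- msupp q | rmM K m == mnm b) q@_m else 0].

Lemma eval_red (F : finFieldType) n (K : 'I_n -> {set F}) N (q : {mpoly F[n]}) x :
  (forall i, is_subfield (K i)) -> (forall i, #|K i| <= N)%N -> x \in grid K ->
  q.@[x] = evB (fun i => #|K i|) x (redc K N q).
Proof.
move=> HK HN; rewrite inE => /forallP xK.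
have rmlt : forall m i, (rmM K m i < #|K i|)%N by move=> m i; rewrite mnmE; apply/rme_lt/sf_card2.
have rmle : forall m i, (rmM K m i <= N)%N by move=> m i; apply: leq_trans (ltnW (rmlt m i)) _.
rewrite mevalE.
transitivity (\sum_(m <- msupp q) q@_m * \prod_(i < n) x i ^+ rmM K m i).
  apply: eq_bigr => m _; congr (_ * _); apply: eq_bigr => i _.
  by rewrite mnmE; apply: sf_rme.
rewrite /evB /redc.
rewrite (eq_bigr (fun b => \sum_(m <- msupp q) (if rmM K m == mnm b then q@_m * \prod_(i < n) x i ^+ b i else 0))); last first.
  move=> b Hb; rewrite ffunE Hb big_distrl /= big_mkcond /=.
  by apply: eq_bigr => m _; case: ifP.
rewrite exchange_big /=; apply: eq_bigr => m _.
have Hb0 : ofm N (rmM K m) \in Box N (fun i => #|K i|).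
  by rewrite in_Box; apply/forallP => i; rewrite ofm_val.
rewrite (bigD1 _ Hb0) /= mnmK // eqxx [X in _ + X]big1 ?addr0.
  by congr (_ * _); apply: eq_bigr => i _; rewrite ofm_val.
move=> b /andP[_ nb]; case: eqP => // E; move: nb.
by rewrite E ofmK eqxx.
Qed.

Lemma in_pf (aT rT : finType) (y : rT) (D : {pred aT}) (f : {ffun aT -> rT}) :
  (f \in pffun_on y D predT) = [forall x, (x \notin D) ==> (f x == y)].
Proof.
apply/pffun_onP/forallP.
  case=> Hs _ x; apply/implyP => xD; apply: contraR xD => fx.
  by apply: (subsetP Hs x); rewrite inE.
move=> H; split => //; apply/subsetP => x; rewrite inE; apply: contraR => xD.
exact: (implyP (H x)).
Qed.

Lemma card_lt_ord m e : (e <= m)%N -> #|[pred x : 'I_m | (x < e)%N]| = e.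
Proof.
move=> Hem.
rewrite -sum1_card -(big_mkord (fun i => i < e)%N (fun=> 1%N)).
rewrite (@big_cat_nat _ _ _ e) //=.
rewrite [X in (_ + X)%N]big_nat_cond [X in (_ + X)%N]big1 ?addn0; last first.
  by move=> i /andP[/andP[Hi _]]; rewrite ltnNge Hi.
rewrite big_nat_cond (eq_bigl (fun i => (0 <= i < e)%N && true)); last first.
  by move=> i; rewrite andbb andbT.
by rewrite -big_nat_cond sum_nat_const_nat subn0 muln1.
Qed.

Lemma cardBox n N (e : 'I_n -> nat) : (forall i, e i <= N.+1)%N ->
  #|Box N e| = (\prod_(i < n) e i)%N.
Proof.
move=> He.
have := @card_family 'I_n (fun _ => 'I_N.+1) (fun i => [pred x : 'I_N.+1 | (x < e i)%N]).
move=> H.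
rewrite (@eq_card _ _ (family (fun i => [pred x : 'I_N.+1 | (x < e i)%N]))); last first.
  by move=> b; rewrite !inE.
rewrite H (foldrE 1%N muln) big_map big_enum /=.
apply: eq_bigr => i _; exact: card_lt_ord.
Qed.

Lemma card_grid (F : finFieldType) n (K : 'I_n -> {set F}) :
  #|grid K| = (\prod_(i < n) #|K i|)%N.
Proof.
have := @card_family 'I_n (fun _ => F) (fun i => mem (K i)).
move=> H.
rewrite (@eq_card _ _ (family (fun i => mem (K i)))); last first.
  by move=> b; rewrite !inE.
by rewrite H (foldrE 1%N muln) big_map big_enum /=.
Qed.

Definition delta (F : finFieldType) n (K : 'I_n -> {set F}) (p : {ffun 'I_n -> F}) : {mpoly F[n]} :=
  \prod_(i < n) (1 - ('X_i - (p i)%:MP) ^+ (#|K i|.-1)).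

Lemma eval_delta (F : finFieldType) n (K : 'I_n -> {set F}) (p x : {ffun 'I_n -> F}) :
  (forall i, is_subfield (K i)) -> x \in grid K -> p \in grid K ->
  (delta K p).@[x] = (x == p)%:R.
Proof.
move=> HK; rewrite !inE => /forallP xK /forallP pK.
rewrite /delta rmorph_prod /=.
under eq_bigr => i _ do rewrite rmorphB rmorph1 rmorphXn rmorphB /= mevalXU mevalC.
have [->|nxp] := eqVneq x p.
  apply: big1 => i _; rewrite subrr expr0n.
  by have := sf_card2 (HK i); case: #|K i| => [|[|k]] //= _; rewrite subr0.
have : ~~ [forall i, x i == p i].
  by apply: contra nxp => /forallP H; apply/eqP/ffunP => i; apply/eqP/H.
rewrite negb_forall => /existsP[i Hi].
rewrite (bigD1 i) //= sf_pow1 ?subrr ?mul0r //.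
  by case: (HK i) => _ HB _ _; apply: HB.
by rewrite subr_eq0.
Qed.

Definition Phi (F : finFieldType) n (K : 'I_n -> {set F}) N
  (c : {ffun {ffun 'I_n -> 'I_N.+1} -> F}) : {ffun {ffun 'I_n -> F} -> F} :=
  [ffun x => if x \in grid K then evB (fun i => #|K i|) x c else 0].

Lemma Phi_inj (F : finFieldType) n (K : 'I_n -> {set F}) N :
  (forall i, is_subfield (K i)) -> (forall i, #|K i| <= N)%N ->
  {in pffun_on 0 (Box N (fun i => #|K i|)) predT &, injective (Phi K (N := N))}.
Proof.
move=> HK HN.
set Dom := pffun_on 0 (Box N (fun i => #|K i|)) predT.
set T := pffun_on (0 : F) (grid K) predT.
apply/imset_injP.
have sub1 : [set Phi K c | c in Dom] \subset T.
  apply/subsetP => g /imsetP[c _ ->]; rewrite in_pf; apply/forallP => x.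
  by apply/implyP => /negbTE xg; rewrite ffunE xg.
have sub2 : T \subset [set Phi K c | c in Dom].
  apply/subsetP => g Hg; apply/imsetP.
  set q := \sum_(p in grid K) g p *: delta K p.
  exists (redc K N q).
    rewrite in_pf; apply/forallP => b; apply/implyP => /negbTE nb.
    by rewrite ffunE nb.
  apply/ffunP => x; rewrite ffunE.
  case: ifP => xg; last first.
    by move: Hg; rewrite in_pf => /forallP /(_ x) /implyP; rewrite xg => /(_ isT) /eqP.
  rewrite -eval_red // /q rmorph_sum /=.
  rewrite (bigD1 x) //= big1 ?addr0.
    by rewrite mevalZ eval_delta // eqxx mulr1.
  by move=> p /andP[pg px]; rewrite mevalZ eval_delta // eq_sym (negbTE px) mulr0.
rewrite eqn_leq leq_imset_card /=.
have -> : #|Dom| = #|T|.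
  rewrite !card_pffun_on card_grid cardBox //.
  by move=> i; apply: leq_trans (HN i) _.
exact: subset_leq_card.
Qed.

Lemma vanish (F : finFieldType) n (K : 'I_n -> {set F}) N c :
  (forall i, is_subfield (K i)) -> (forall i, #|K i| <= N)%N ->
  c \in pffun_on 0 (Box N (fun i => #|K i|)) predT ->
  (forall x, x \in grid K -> evB (fun i => #|K i|) x c = 0) ->
  forall b, c b = 0.
Proof.
move=> HK HN cD Hv.
set c0 : {ffun {ffun 'I_n -> 'I_N.+1} -> F} := [ffun => 0].
have c0D : c0 \in pffun_on 0 (Box N (fun i => #|K i|)) predT.
  by rewrite in_pf; apply/forallP => b; rewrite ffunE eqxx implybT.
have := Phi_inj HK HN cD c0D.
have E : Phi K c = Phi K c0.
  apply/ffunP => x; rewrite !ffunE; case: ifP => // xg.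
  rewrite Hv // /evB big1 // => b _; by rewrite ffunE mul0r.
by move=> /(_ E) -> b; rewrite ffunE.
Qed.

Lemma rmM_id (F : finFieldType) n (K : 'I_n -> {set F}) (m : 'X_{1..n}) :
  (forall i, m i < #|K i|)%N -> rmM K m = m.
Proof. by move=> H; apply/mnmP => i; rewrite mnmE rme_id. Qed.

Lemma mdeg_rmM_lt (F : finFieldType) n (K : 'I_n -> {set F}) (m : 'X_{1..n}) i :
  (forall i, is_subfield (K i)) -> (#|K i| <= m i)%N -> (mdeg (rmM K m) < mdeg m)%N.
Proof.
move=> HK Hi; rewrite !mdegE (bigD1 i) //= [X in (_ < X)%N](bigD1 i) //=.
have H1 : (rmM K m i < m i)%N by rewrite mnmE; apply: rme_ltn => //; exact: sf_card2.
have H2 : (\sum_(j < n | j != i) rmM K m j <= \sum_(j < n | j != i) m j)%N.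
  by apply: leq_sum => j _; rewrite mnmE; apply/rme_le/sf_card2.
by rewrite -addSn; exact: leq_add H1 H2.
Qed.

Definition hpol (F : finFieldType) n N (e : 'I_n -> nat) (c : {ffun {ffun 'I_n -> 'I_N.+1} -> F}) : {mpoly F[n]} :=
  \sum_(b in Box N e) c b *: 'X_[mnm b].

Lemma hpol_coef (F : finFieldType) n N (e : 'I_n -> nat) (c : {ffun {ffun 'I_n -> 'I_N.+1} -> F}) m :
  (hpol e c)@_m = \sum_(b in Box N e) c b * (mnm b == m)%:R.
Proof. by rewrite /hpol raddf_sum /=; apply: eq_bigr => b _; rewrite mcoeffZ mcoeffX. Qed.

Lemma hpol_coefB (F : finFieldType) n N (e : 'I_n -> nat) (c : {ffun {ffun 'I_n -> 'I_N.+1} -> F}) b0 :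
  b0 \in Box N e -> (hpol e c)@_(mnm b0) = c b0.
Proof.
move=> Hb; rewrite hpol_coef (bigD1 b0) //= eqxx mulr1 big1 ?addr0 //.
move=> b /andP[_ nb]; case: eqP; last by rewrite mulr0.
by move=> E; move: nb; rewrite -(ofmK b) E ofmK eqxx.
Qed.

Lemma hpol_supp (F : finFieldType) n N (e : 'I_n -> nat) (c : {ffun {ffun 'I_n -> 'I_N.+1} -> F}) m :
  (hpol e c)@_m != 0 -> exists2 b, b \in Box N e & mnm b = m.
Proof.
rewrite hpol_coef => H.
have : ~~ [forall b, (b \in Box N e) ==> (mnm b != m)].
  apply: contra H => /forallP H; apply/eqP; apply: big1 => b Hb.
  by have := implyP (H b) Hb; case: eqP => //; rewrite mulr0.
rewrite negb_forall => /existsP[b]; rewrite negb_imply negbK => /andP[Hb /eqP E].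
by exists b.
Qed.

Lemma card_F_gt1 (F : finFieldType) : (1 < #|F|)%N.
Proof.
have := max_card (pred2 (0 : F) 1); rewrite card2 eq_sym oner_eq0.
by [].
Qed.

Lemma footprint (F : finFieldType) n (K : 'I_n -> {set F}) N (f : {mpoly F[n]}) :
  (forall i, is_subfield (K i)) -> (forall i, #|K i| <= N)%N -> f != 0 ->
  (forall m : 'X_{1..n}, m \in msupp f -> forall i : 'I_n, (m i < #|K i|)%N) ->
  (\prod_(i < n) (#|K i| - mlead f i) <= #|[set x in grid K | f.@[x] != 0%R]|)%N.
Proof.
move=> HK HN fnz Hred.
set a := mlead f.
set ea := fun i => (#|K i| - a i)%N.
set S := [set x in grid K | f.@[x] != 0].
set DomA := pffun_on (0 : F) (Box N ea) predT.
set Psi := fun c : {ffun {ffun 'I_n -> 'I_N.+1} -> F} =>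
  [ffun x : {ffun 'I_n -> F} => if x \in S then (f * hpol ea c).@[x] else 0].
have aK : forall i, (a i < #|K i|)%N by apply: Hred; exact: mlead_supp.
have inj : {in DomA &, injective Psi}.
  move=> c1 c2 D1 D2 E.
  set c := [ffun b => c1 b - c2 b].
  have Ehc : hpol ea c = hpol ea c1 - hpol ea c2.
    rewrite /hpol -sumrB; apply: eq_bigr => b _; by rewrite ffunE scalerBl.
  have Hv : forall x, x \in grid K -> (f * hpol ea c).@[x] = 0.
    move=> x xg; rewrite rmorphM /= Ehc rmorphB /=.
    case xS : (x \in S).
      rewrite mulrBr; move/ffunP: (E) => /(_ x); rewrite /Psi !ffunE xS !rmorphM /= => ->.
      by rewrite subrr.
    move: xS; rewrite inE xg /= => /negbFE/eqP ->; by rewrite mul0r.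
  have hc0 : hpol ea c = 0.
    apply/eqP; apply: contraT => nz.
    set h := hpol ea c in nz Hv.
    set b0 := mlead h.
    have : h@_b0 != 0 by rewrite mleadc_eq0.
    case/hpol_supp => bb Hbb Ebb.
    set q := f * h. set m0 := (a + b0)%MM.
    have qm0 : q@_m0 != 0.
      by rewrite /q /m0 mleadcM mulf_neq0 // mleadc_eq0.
    have m0box : forall i, (m0 i < #|K i|)%N.
      move=> i; rewrite mnmDE -Ebb mnmE.
      move: Hbb; rewrite in_Box => /forallP /(_ i); rewrite /ea; by rewrite ltn_subRL.
    have msq : msize q = (mdeg m0).+1.
      rewrite /q msizeM // -!mlead_deg // mdegD -/a -/b0 addSn addnS. by [].
    have rc1 : \sum_(m <- msupp q | rmM K m == m0) q@_m = q@_m0.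
      rewrite big_mkcond (bigD1_seq m0) ?msupp_uniq //=; last by move: qm0; rewrite mcoeff_eq0 negbK.
      rewrite (rmM_id m0box) eqxx big1_seq ?addr0 // => m /andP[nm mq].
      case: eqP => // E2; exfalso.
      have [Hb|] := boolP [forall i, (m i < #|K i|)%N].
        by move: nm; rewrite -E2 rmM_id ?eqxx //; apply/forallP.
      rewrite negb_forall => /existsP[i]; rewrite -leqNgt => Hi.
      have := mdeg_rmM_lt HK Hi; have := msize_mdeg_lt mq; rewrite msq E2; lia.
    have rD : redc K N q \in pffun_on 0 (Box N (fun i => #|K i|)) predT.
      rewrite in_pf; apply/forallP => b; apply/implyP => /negbTE nb.
      by rewrite ffunE nb.
    have := vanish HK HN rD.
    have Hm0 : ofm N m0 \in Box N (fun i => #|K i|).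
      by rewrite in_Box; apply/forallP => i; rewrite ofm_val //; apply: leq_trans (ltnW (m0box i)) _.
    move=> /(_ _ (ofm N m0)); rewrite ffunE Hm0 mnmK; last first.
      by move=> i; apply: leq_trans (ltnW (m0box i)) _.
    rewrite rc1 => H; move: qm0; rewrite H ?eqxx //.
    by move=> x xg; rewrite -eval_red // Hv.
  apply/ffunP => b.
  case Hb : (b \in Box N ea).
    have := hpol_coefB c Hb; rewrite hc0 mcoeff0 ffunE => /esym/eqP.
    by rewrite subr_eq0 => /eqP.
  move: D1 D2; rewrite !in_pf => /forallP /(_ b) /implyP; rewrite Hb => /(_ isT) /eqP ->.
  by move=> /forallP /(_ b) /implyP; rewrite Hb => /(_ isT) /eqP ->.
have sub : [set Psi c | c in DomA] \subset pffun_on 0 S predT.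
  apply/subsetP => g /imsetP[c _ ->]; rewrite in_pf; apply/forallP => x.
  by apply/implyP => /negbTE xS; rewrite ffunE xS.
have := subset_leq_card sub; rewrite card_in_imset // card_pffun_on card_pffun_on.
rewrite leq_exp2l; last exact: (card_F_gt1 F).
rewrite cardBox; first by [].  
by move=> i; rewrite /ea; apply: leq_trans (leq_subr _ _) _; apply: leq_trans (HN i) _.
Qed.

Lemma sum_ord_lt n k (G : nat -> nat) : (k <= n)%N ->
  (\sum_(i < n | (i < k)%N) G i = \sum_(0 <= i < k) G i)%N.
Proof.
move=> kn; rewrite -(big_mkord (fun i => (i < k)%N) G) (@big_cat_nat _ _ _ k) //=.
rewrite [X in (_ + X)%N]big_nat_cond [X in (_ + X)%N]big_pred0 ?addn0; last first.
  by move=> i; apply/negbTE/negP => /andP[/andP[H1 _] H2]; lia.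
rewrite big_nat_cond [RHS]big_nat_cond; apply: eq_bigl => i.
by case: (i < k)%N; rewrite ?andbT ?andbF.
Qed.

Lemma prod_ord_gt n k (G : nat -> nat) : (k < n)%N ->
  (\prod_(i < n | (k < i)%N) G i = \prod_(k.+1 <= i < n) G i)%N.
Proof.
move=> kn; rewrite -(big_mkord (fun i => (k < i)%N) G) (@big_cat_nat _ _ _ k.+1) //=.
rewrite [X in (X * _)%N]big_nat_cond [X in (X * _)%N]big_pred0 ?mul1n; last first.
  by move=> i; apply/negbTE/negP => /andP[/andP[H1 H3] H2]; lia.
rewrite big_nat_cond [RHS]big_nat_cond; apply: eq_bigl => i.
by case: (k < i)%N; rewrite ?andbT ?andbF.
Qed.

Lemma count_card (T : finType) (A : {pred T}) (P : pred T) :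
  count P (enum A) = #|[pred x | P x && (x \in A)]|.
Proof. by rewrite cardE /enum_mem -size_filter filter_predI. Qed.

Lemma chain_eq (F : finFieldType) n (K : 'I_n -> {set F}) (o1 o2 : 'I_n) :
  (forall i j : 'I_n, (i <= j)%N -> K i \subset K j) -> #|K o1| = #|K o2| -> K o1 = K o2.
Proof.
move=> Hc Hcard; case: (leqP o1 o2) => H.
  by apply/eqP; rewrite eqEcard Hc // Hcard leqnn.
by apply/esym/eqP; rewrite eqEcard Hc ?Hcard ?leqnn //; apply: ltnW.
Qed.

Unset Implicit Arguments.

Theorem mainTheorem9 (F : finFieldType) (n : nat) (K : 'I_n -> {set F})
  (HKsub : forall i, is_subfield (K i))
  (Hchain : forall i j : 'I_n, (i <= j)%N -> K i \subset K j)
  (f : {mpoly F[n]}) (k : 'I_n) (l : nat)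
  (Hl0 : (0 < l)%N) (Hl1 : (l <= #|K k| - 1)%N)
  (Hdeg : msize f = ((\sum_(i < n | (i < k)%N) (#|K i| - 1)) + l).+1%N)
  (Hred : forall m : 'X_{1..n}, m \in msupp f -> forall i : 'I_n, (m i < #|K i|)%N)
  (Hw : hweight (Psi K f) = ((#|K k| - l) * \prod_(i < n | (k < i)%N) #|K i|)%N) :
  exists (j : 'I_k.+1) (t : 'I_k.+1 -> 'I_n),
    [/\ (#|K (widen_ord (ltn_ord k) j)| >= #|K k| - l)%N,
        injective t,
        forall i : 'I_k.+1, K (t i) = K (widen_ord (ltn_ord k) i)
      & exists m : 'X_{1..n},
          [/\ f@_m != 0,
              forall i : 'I_k.+1, m (t i) =
                (if i == j then #|K (widen_ord (ltn_ord k) i)| - (#|K k| - l)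
                 else #|K (widen_ord (ltn_ord k) i)| - 1)%N
            & forall x : 'I_n, (forall i, t i != x) -> m x = 0%N]].
Proof.
have HN : forall i, (#|K i| <= #|F|)%N by move=> i; exact: max_card.
have fnz : f != 0.
  by apply/eqP => E; move: Hdeg; rewrite E msize0.
have FP := footprint HKsub HN fnz Hred.
have Hw' : hweight (Psi K f) = #|[set x in grid K | f.@[x] != 0%R]|.
  rewrite /hweight /Psi count_map count_card; apply: eq_card => x.
  by rewrite !inE andbC.
rewrite Hw' in Hw.
set a := mlead f in FP *.
set s := fun i : nat => #|K (insubd k i)|.
set am := fun i : nat => a (insubd k i).
have sE : forall o : 'I_n, #|K o| = s o by move=> o; rewrite /s valKd.
have aE : forall o : 'I_n, a o = am o by move=> o; rewrite /am valKd.
have aK : forall i, (a i < #|K i|)%N by apply: Hred; exact: mlead_supp.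
have Hs : forall i j, (i <= j < n)%N -> (s i <= s j)%N.
  move=> i j /andP[ij jn]; rewrite /s; apply: subset_leq_card; apply: Hchain.
  by rewrite !insubdK //; apply: leq_ltn_trans jn.
have Ha : forall i, (i < n)%N -> (am i < s i)%N by move=> i _; exact: aK.
have Hk : (k < n)%N := ltn_ord k.
have Hl1' : (l < s k)%N by rewrite -sE; lia.
have Hsum : (\sum_(0 <= i < n) am i = \sum_(0 <= i < k) (s i - 1) + l)%N.
  rewrite big_mkord (eq_bigr (fun i => a i)); last by move=> i _; rewrite aE.
  rewrite -mdegE.
  have := mlead_deg fnz; rewrite Hdeg -/a => [[->]].
  congr (_ + _)%N; rewrite -(@sum_ord_lt n k (fun i => s i - 1)%N); last exact: ltnW.
  by apply: eq_bigr => i _; rewrite sE.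
have [_ HB] := lemB n s am k l Hs Ha Hk Hl0 Hl1' Hsum.
have EP : (\prod_(0 <= i < n) (s i - am i) = \prod_(i < n) (#|K i| - a i))%N.
  by rewrite big_mkord; apply: eq_bigr => i _; rewrite sE aE.
have EW : ((s k - l) * \prod_(k.+1 <= i < n) s i = (#|K k| - l) * \prod_(i < n | (k < i)%N) #|K i|)%N.
  rewrite sE -prod_ord_gt //; congr (_ * _)%N.
  by apply: eq_bigr => i _; rewrite sE.
rewrite EP EW -Hw in HB.
have [j' [t' [[Hj1 Hj2] Ht1 Ht2 Ht3 Ht4]]] := HB FP.
have Ht1' : forall i : 'I_k.+1, (t' i < n)%N by move=> i; have [] := Ht1 i (ltn_ord i).
set t := fun i : 'I_k.+1 => insubd k (t' i) : 'I_n.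
have tv : forall i, val (t i) = t' i by move=> i; rewrite /t insubdK //; exact: Ht1'.
exists (inord j'), t; split.
- rewrite (sE (widen_ord _ _)) /= inordK; last by rewrite ltnS.
  by rewrite sE.
- move=> i1 i2 E; apply: val_inj; apply: (Ht2 i1 i2); [by rewrite -ltnS | by rewrite -ltnS |].
  by rewrite -!tv E.
- move=> i; apply: chain_eq => //.
  rewrite !sE tv /=; have [_ ->] := Ht1 i (ltn_ord i); by [].
exists a; split.
- by rewrite mleadc_eq0.
- move=> i; rewrite aE /am /t.
  have -> : insubd k (insubd k (t' i) : 'I_n) = insubd k (t' i) by rewrite valKd.
  rewrite -/(am (t' i)) Ht3; last by rewrite -ltnS.
  have -> : (i == inord j') = (val i == j').
    by rewrite -val_eqE /= inordK // ltnS.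
  by rewrite !sE /=.
- move=> x Hx; rewrite aE; apply: Ht4 => // i' Hi'.
  have := Hx (Ordinal (Hi' : (i' < k.+1)%N)); apply: contra => /eqP E.
  by apply/eqP; apply: val_inj; rewrite tv.
Qed.
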